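(* Let $p,p'\ge1$ with $|p-p'|=1$ and let $X=\alpha_{(p,p')}(Y)$ where $Y=y_1y_2\cdots$ is a Sturmian word in which $bb$ does not occur. An occurrence of the letter $b$ in $X$ (as a palindrome center) is original if and only if it is the first letter $b$ of $\alpha(y_jy_{j+1})$ (i.e. the last letter of $\alpha(y_j)$) for some $j$ with $y_j\neq y_{j+1}$.
   Context: $\alpha_{(p,p')}$ is the morphism $a\mapsto a^pb$, $b\mapsto a^{p'}b$. A Sturmian word is a right-infinite aperiodic word over $\{a,b\}$ with exactly $n+1$ factors of each length $n$. A center occurrence in a word is an occurrence of one of the factors $a$, $b$, $aa$. Write $X=\alpha(y_1)\alpha(y_2)\cdots$, with $\alpha(y_j)$ occupying positions $s_j+1,\dots,s_j+|\alpha(y_j)|$, $s_j=\sum_{t<j}|\alpha(y_t)|$. Reflections: the reflection of an occurrence $y_j=a$ (resp. $b$) is the center (middle letter if odd length, middle two letters if even length) of the run $a^p$ (resp. $a^{p'}$) at positions $s_j+1,\dots,s_j+p$ (resp. $s_j+p'$); the reflection of an occurrence $y_jy_{j+1}=aa$ is the letter $b$ at position $s_j+p+1$. A center occurrence of $X$ is original if it is not the reflection of any center occurrence of $Y$. *)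

(* Defs.v *)
(* Words are 0-indexed: W : nat -> letter, W i = letter at position i. *)
From HB Require Import structures.
From mathcomp Require Import all_boot.
Set Implicit Arguments. Unset Strict Implicit. Unset Printing Implicit Defensive.

Inductive letter := a | b.

Definition eqletter (x y : letter) : bool :=
  match x, y with a, a | b, b => true | _, _ => false end.
Lemma eqletterP : Equality.axiom eqletter.
Proof. by case; case; constructor. Qed.
HB.instance Definition _ := hasDecEq.Build letter eqletterP.

Definition word := nat -> letter.

Definition factor (W : word) (i n : nat) : seq letter := mkseq (fun k => W (i + k)) n.

Definition aperiodic (W : word) : Prop :=
  ~ (exists N P, 0 < P /\ forall i, N <= i -> W (i + P) = W i).

Definition sturmian (W : word) : Prop :=
  aperiodic W /\
  forall n, exists l : seq (seq letter),
    uniq l /\ size l = n.+1 /\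
    forall w, (w \in l) <-> (exists i, w = factor W i n).

Definition alpha (p p' : nat) (x : letter) : seq letter :=
  match x with a => rcons (nseq p a) b | b => rcons (nseq p' a) b end.

(* s_j = sum_{t<j} |alpha(y_t)|; alpha(y_j) occupies (0-indexed) positions
   s_j, ..., s_j + |alpha(y_j)| - 1 of X *)
Definition spos (p p' : nat) (Y : word) (j : nat) : nat :=
  \sum_(t < j) size (alpha p p' (Y t)).

Definition is_image (p p' : nat) (Y X : word) : Prop :=
  forall j k, k < size (alpha p p' (Y j)) ->
    X (spos p p' Y j + k) = nth a (alpha p p' (Y j)) k.

Definition center_occ (W : word) (i n : nat) : Prop :=
  factor W i n = [:: a] \/ factor W i n = [:: b] \/ factor W i n = [:: a; a].

(* center of the run at positions st, ..., st+L-1: the middle letter if L odd,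
   the middle two letters if L even; returned as (start, length) *)
Definition run_center (st L : nat) : nat * nat :=
  (st + (L.-1)./2, if odd L then 1 else 2).

Definition reflects (p p' : nat) (Y : word) (j n i m : nat) : Prop :=
  (factor Y j n = [:: a] /\ (i, m) = run_center (spos p p' Y j) p) \/
  (factor Y j n = [:: b] /\ (i, m) = run_center (spos p p' Y j) p') \/
  (factor Y j n = [:: a; a] /\ i = spos p p' Y j + p /\ m = 1).

Definition original (p p' : nat) (Y X : word) (i m : nat) : Prop :=
  center_occ X i m /\
  ~ (exists j n, center_occ Y j n /\ reflects p p' Y j n i m).

(* Main.v *)
Require Import Defs.
From mathcomp Require Import all_boot zify.

Lemma size_alpha p p' x : size (alpha p p' x) = (if x is a then p else p').+1.
Proof. by case: x; rewrite /= size_rcons size_nseq. Qed.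

Lemma nth_alpha p p' x k : k < size (alpha p p' x) ->
  nth a (alpha p p' x) k = if k == (size (alpha p p' x)).-1 then b else a.
Proof.
rewrite size_alpha /= => Hk; case: x Hk => /= Hk;
rewrite nth_rcons size_nseq nth_nseq; case: ltngtP => // H; try by rewrite (ltn_eqF H); by move: Hk; rewrite ltnS leqNgt H.
Qed.

Lemma sposS p p' Y j : spos p p' Y j.+1 = spos p p' Y j + size (alpha p p' (Y j)).
Proof. by rewrite /spos big_ord_recr. Qed.

Lemma spos_lt p p' Y j k : j < k -> spos p p' Y j < spos p p' Y k.
Proof.
elim: k => // k IH; rewrite ltnS leq_eqVlt => /orP [/eqP -> | H].
  by rewrite sposS size_alpha addnS ltnS leq_addr.
apply: (ltn_trans (IH H)); by rewrite sposS size_alpha addnS ltnS leq_addr.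
Qed.

Lemma spos_inj p p' Y j k : spos p p' Y j = spos p p' Y k -> j = k.
Proof.
move=> E; case: (ltngtP j k) => // H; have := spos_lt p p' Y _ _ H; by rewrite E ltnn.
Qed.

Lemma spos0 p p' Y : spos p p' Y 0 = 0.
Proof. by rewrite /spos big_ord0. Qed.

Lemma locate p p' Y i : exists j, spos p p' Y j <= i < spos p p' Y j.+1.
Proof.
elim: i => [|i [j /andP [H1 H2]]].
  by exists 0; rewrite spos0 sposS spos0 size_alpha.
case: (ltngtP i.+1 (spos p p' Y j.+1)) => [H|H|H].
- by exists j; rewrite H andbT; apply: leqW.
- by move: H; rewrite ltnNge H2.
- exists j.+1; rewrite H leqnn /= (sposS _ _ _ j.+1) size_alpha addnS ltnS leq_addr //.
Qed.

Theorem corollary1 (p p' : nat) (Y X : word) :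
  1 <= p -> 1 <= p' -> (p = p'.+1 \/ p' = p.+1) ->
  sturmian Y ->
  (forall j, ~ (Y j = b /\ Y j.+1 = b)) ->
  is_image p p' Y X ->
  forall i, X i = b ->
    (original p p' Y X i 1 <->
     exists j, i = spos p p' Y j + (size (alpha p p' (Y j))).-1 /\ Y j <> Y j.+1).
Proof.
move=> Hp Hp' _ _ Hbb Him i Xi.
have Xat : forall j k, k < size (alpha p p' (Y j)) ->
   X (spos p p' Y j + k) = if k == (size (alpha p p' (Y j))).-1 then b else a.
  by move=> j k Hk; rewrite Him // nth_alpha.
split.
- move=> [_ Hno].
  have [j /andP [H1 H2]] := locate p p' Y i.
  have Hk : i - spos p p' Y j < size (alpha p p' (Y j)).
    by rewrite ltn_subLR // -sposS.
  have := Xat j _ Hk; rewrite subnKC // Xi.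
  case: eqP => // Ek _.
  have Ei : i = spos p p' Y j + (size (alpha p p' (Y j))).-1 by rewrite -Ek subnKC.
  exists j; split => // EY.
  case EJ: (Y j) EY => EY.
  + apply: Hno; exists j, 2.
    have F : factor Y j 2 = [:: a; a] by rewrite /factor /mkseq /= addn0 addn1 EJ -EY.
    split; first by right; right.
    right; right; split => //; split => //; by rewrite Ei size_alpha EJ.
  + by apply: (Hbb j); rewrite -EY EJ.
- move=> [j [Ei Hne]]; split.
  + by right; left; rewrite /factor /mkseq /= addn0 Xi.
  + move=> [j' [n [_ [[F E] | [[F E] | [F [Ei' _]]]]]]]; try (case: E => E1 _; rewrite E1 in Xi).
    * move: F; rewrite /factor; case: n => //; case => // [[Fj]].
      rewrite addn0 in Fj.
      have Hk : (p.-1)./2 < size (alpha p p' (Y j')).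
        rewrite size_alpha Fj /= ltn_half_double -!muln2; lia.
      move: (Xat j' _ Hk); rewrite Xi size_alpha Fj /=; case: eqP => // E.
      have : (p.-1)./2 < p by rewrite ltn_half_double -muln2; lia.
      by rewrite E ltnn.
    * move: F; rewrite /factor; case: n => //; case => // [[Fj]].
      rewrite addn0 in Fj.
      have Hk : (p'.-1)./2 < size (alpha p p' (Y j')).
        rewrite size_alpha Fj /= ltn_half_double -!muln2; lia.
      move: (Xat j' _ Hk); rewrite Xi size_alpha Fj /=; case: eqP => // E.
      have : (p'.-1)./2 < p' by rewrite ltn_half_double -muln2; lia.
      by rewrite E ltnn.
    * move: F; rewrite /factor; case: n => //; case => //; case => // [[F1 F2]].
      rewrite addn0 in F1; rewrite addn1 in F2.
      have E : spos p p' Y j'.+1 = spos p p' Y j.+1.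
        rewrite !sposS -(prednK (n := size (alpha p p' (Y j)))); last by rewrite size_alpha.
        by rewrite addnS -Ei Ei' size_alpha F1 addnS.
      have := spos_inj _ _ _ _ _ E; case => Ej; apply: Hne; by rewrite -Ej F1 F2.
Qed.
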